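(* In the acoustic setting, suppose $A<0$ and $B>0$ on $[\rho_-,\rho_+]$, $A^2+B^2=1$ at $\rho_\pm$ and $A^2+B^2>1$ on $(\rho_-,\rho_+)$, $A(\rho)=-1$ exactly at $\rho_1<\rho_2$ in $(\rho_-,\rho_+)$, and $A<-1$ on $(\rho_1,\rho_2)$. Then for the $(+)$ family: $d\varphi^+/dt=B(\rho_i)/\rho_i>0$ on the horizons $\rho=\rho_i$ ($i=1,2$), so both are traversed counterclockwise as $t$ increases; $d\rho^+/dt>0$ on $(\rho_-,\rho_1)\cup(\rho_2,\rho_+)$ and $d\rho^+/dt<0$ on $(\rho_1,\rho_2)$ (in particular $(+)$ starts at $\rho=\rho_-$ and ends at $\rho=\rho_+$). Consequently every $(+)$ trajectory with initial radius in $(\rho_-,\rho_1)$ satisfies $\rho^+(t)\to\rho_1$ as $t\to+\infty$; every $(+)$ trajectory with initial radius in $(\rho_1,\rho_2)$ satisfies $\rho^+(t)\to\rho_1$ as $t\to+\infty$ and $\rho^+(t)\to\rho_2$ as $t\to-\infty$; and every $(+)$ trajectory with initial radius in $(\rho_2,\rho_+)$ satisfies $\rho^+(t)\to\rho_2$ as $t\to-\infty$.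
   Context: Acoustic metric in the plane with polar coordinates $(\rho,\varphi)$: Hamiltonian $H=(\tau+A\xi_\rho+B\xi_\varphi/\rho)^2-\xi_\rho^2-(\xi_\varphi/\rho)^2$, $A=A(\rho)$, $B=B(\rho)$ smooth. The ergoregion is the annulus $\rho_-<\rho<\rho_+$ where $A^2+B^2>1$. Zero-energy null geodesics are the null bicharacteristics with $\tau=0$ parametrized by $t$; the sign in $\xi_\rho=\frac{-AB\pm\sqrt{A^2+B^2-1}}{A^2-1}\,\xi_\varphi/\rho$ defines the $(\pm)$ family. With $s=\sqrt{A^2+B^2-1}$, the equations of motion in the ergoregion are $$\frac{d\rho^\pm}{dt}=\frac{A(A^2+B^2-1)\pm Bs}{A^2+B^2},\qquad \frac{d\varphi^\pm}{dt}=\frac{s\,(Bs\mp A)}{\rho\,(A^2+B^2)}.$$ A horizon of the $(\pm)$ family is a circle $\{\rho=c\}$ in the ergoregion which is a closed trajectory of that family. *)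

(* Defs.v *)
From Stdlib Require Import Reals.
Open Scope R_scope.

Fixpoint Cn_on (U : R -> Prop) (n : nat) (f : R -> R) : Prop :=
  match n with
  | O => forall x, U x -> continuity_pt f x
  | S m => exists f' : R -> R,
      (forall x, U x -> derivable_pt_lim f x (f' x)) /\ Cn_on U m f'
  end.

Definition smooth_on (U : R -> Prop) (f : R -> R) : Prop :=
  forall n, Cn_on U n f.

Definition sfun (A B : R -> R) (r : R) : R :=
  sqrt (A r ^ 2 + B r ^ 2 - 1).

(* Equations of motion of zero-energy null geodesics in the ergoregion;
   eps = 1 for the (+) family, eps = -1 for the (-) family. *)
Definition drho (eps : R) (A B : R -> R) (r : R) : R :=
  (A r * (A r ^ 2 + B r ^ 2 - 1) + eps * B r * sfun A B r)
  / (A r ^ 2 + B r ^ 2).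

Definition dphi (eps : R) (A B : R -> R) (r : R) : R :=
  sfun A B r * (B r * sfun A B r - eps * A r)
  / (r * (A r ^ 2 + B r ^ 2)).

Definition traj (eps : R) (A B : R -> R) (rm rp : R) (I : R -> Prop)
  (rho phi : R -> R) : Prop :=
  forall t, I t ->
    rm < rho t < rp /\
    derivable_pt_lim rho t (drho eps A B (rho t)) /\
    derivable_pt_lim phi t (dphi eps A B (rho t)).

Definition lim_pinf (f : R -> R) (l : R) : Prop :=
  forall e, 0 < e -> exists M, forall t, M < t -> Rabs (f t - l) < e.

Definition lim_minf (f : R -> R) (l : R) : Prop :=
  forall e, 0 < e -> exists M, forall t, t < M -> Rabs (f t - l) < e.

(* Main.v *)
Require Import Defs.
From Stdlib Require Import Reals Lra Classical.
Open Scope R_scope.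

Lemma cont_delta (g : R -> R) (w eps : R) : continuity_pt g w -> 0 < eps ->
  exists del, 0 < del /\ forall x, Rabs (x - w) < del -> Rabs (g x - g w) < eps.
Proof.
  intros Hc He. destruct (Hc eps He) as [del [Hd H]]. exists del. split; auto.
  intros x Hx. destruct (Req_dec x w) as [->|Hne].
  - rewrite Rminus_diag, Rabs_R0; auto.
  - apply (H x). split. split; [exact I| auto]. exact Hx.
Qed.

Lemma first_time (g : R -> R) (a b e : R) : a <= b ->
  (forall x, a <= x <= b -> continuity_pt g x) -> g a < e -> e <= g b ->
  exists w, a < w <= b /\ e <= g w /\ forall x, a <= x < w -> g x < e.
Proof.
  intros Hab Hc Ha Hb.
  set (E := fun x => a <= x <= b /\ forall y, a <= y <= x -> g y < e).
  assert (Hbd : bound E) by (exists b; intros x [Hx _]; lra).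
  assert (HEa : E a) by (split; [lra| intros y Hy; replace y with a by lra; auto]).
  destruct (completeness E Hbd (ex_intro _ a HEa)) as [w [Hub Hlub]].
  assert (Haw : a <= w) by (apply Hub; auto).
  assert (Hwb : w <= b) by (apply Hlub; intros x [Hx _]; lra).
  assert (P : forall x, a <= x < w -> g x < e).
  { intros x Hx. destruct (classic (exists z, E z /\ x < z)) as [[z [[_ Hz] Hxz]]|Hn].
    - apply Hz; lra.
    - exfalso. assert (w <= x). { apply Hlub. intros z Ez.
        destruct (Rle_dec z x); auto. exfalso; apply Hn; exists z; split; auto; lra. }
      lra. }
  assert (Hew : e <= g w).
  { destruct (Rle_dec e (g w)) as [h|h]; auto. exfalso.
    destruct (cont_delta g w (e - g w) (Hc w ltac:(lra)) ltac:(lra)) as [del [Hdel Hd]].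
    destruct (Req_dec w b) as [->|Hne]; [lra|].
    set (x' := Rmin b (w + del/2)).
    assert (Ex' : E x').
    { split. unfold x'; split; [apply Rmin_glb; lra | apply Rmin_l].
      intros y Hy. destruct (Rlt_dec y w). apply P; lra.
      assert (Rabs (y - w) < del). { assert (y <= w + del/2) by (pose proof (Rmin_r b (w+del/2)); unfold x' in Hy; lra).
        rewrite Rabs_right; lra. }
      specialize (Hd y H). apply Rabs_def2 in Hd. lra. }
    specialize (Hub x' Ex'). unfold x' in Hub.
    assert (w < Rmin b (w + del/2)) by (apply Rmin_glb_lt; lra). lra. }
  exists w. split; [|split]; auto.
  split; auto. destruct (Req_dec a w) as [<-|]; [lra|lra].
Qed.

Lemma cont_refl (g : R -> R) (x : R) : continuity_pt g (-x) ->
  continuity_pt (fun y => - g (- y)) x.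
Proof.
  intro H.
  apply (continuity_pt_opp (fun y => g (-y))).
  apply (continuity_pt_comp Ropp g x); auto.
  apply continuity_pt_opp. apply (derivable_continuous_pt id), derivable_pt_id.
Qed.

Lemma last_time (g : R -> R) (a b c : R) : a <= b ->
  (forall x, a <= x <= b -> continuity_pt g x) -> g a <= c -> c < g b ->
  exists s, a <= s < b /\ g s <= c /\ forall x, s < x <= b -> c < g x.
Proof.
  intros Hab Hc Ha Hb.
  destruct (first_time (fun y => - g (- y)) (-b) (-a) (-c)) as [w [Hw [Hw2 Hw3]]].
  - lra.
  - intros x Hx. apply cont_refl. apply Hc. lra.
  - rewrite Ropp_involutive; lra.
  - rewrite Ropp_involutive; lra.
  - exists (-w). split; [lra|split].
    + lra.
    + intros x Hx. specialize (Hw3 (-x) ltac:(lra)). rewrite Ropp_involutive in Hw3. lra.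
Qed.
Lemma dcont (g : R -> R) x l : derivable_pt_lim g x l -> continuity_pt g x.
Proof. intro H. apply derivable_continuous_pt. exists l. exact H. Qed.

Lemma barrier (g D : R -> R) (a b c d : R) : a <= b -> c < d ->
  (forall x, a <= x <= b -> derivable_pt_lim g x (D x)) ->
  (forall x, a <= x <= b -> c < g x < d -> D x < 0) ->
  g a <= c -> g b <= c.
Proof.
  intros Hab Hcd Hd Hneg Ha.
  destruct (Rle_dec (g b) c) as [h|h]; auto. exfalso.
  assert (Hc : forall x, a <= x <= b -> continuity_pt g x) by (intros x Hx; eapply dcont; eauto).
  destruct (last_time g a b c Hab Hc Ha ltac:(lra)) as [s [Hs [Hs2 Hs3]]].
  set (e := Rmin (g b) ((c+d)/2)).
  assert (He1 : c < e) by (unfold e; apply Rmin_glb_lt; lra).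
  assert (He2 : e <= g b) by apply Rmin_l.
  assert (He3 : e < d) by (pose proof (Rmin_r (g b) ((c+d)/2)); fold e in H; lra).
  destruct (first_time g s b e ltac:(lra) ltac:(intros; apply Hc; lra) ltac:(lra) He2)
    as [w [Hw [Hw2 Hw3]]].
  destruct (MVT_cor2 g D s w ltac:(lra) ltac:(intros; apply Hd; lra)) as [xi [Hm Hxi]].
  assert (D xi < 0). { apply Hneg. lra. split. apply Hs3; lra. specialize (Hw3 xi ltac:(lra)); lra. }
  assert (D xi * (w - s) < 0) by (apply Rmult_neg_pos; lra).
  lra.
Qed.

Lemma barrier2 (g D : R -> R) (a b c d : R) : a <= b -> d < c ->
  (forall x, a <= x <= b -> derivable_pt_lim g x (D x)) ->
  (forall x, a <= x <= b -> d < g x < c -> 0 < D x) ->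
  c <= g a -> c <= g b.
Proof.
  intros Hab Hcd Hd Hpos Ha.
  assert (H : (fun x => - g x) b <= - c).
  { apply (barrier (fun x => - g x) (fun x => - D x) a b (-c) (-d)).
    - lra.
    - lra.
    - intros x Hx. apply (derivable_pt_lim_opp g). auto.
    - intros x Hx Hg. specialize (Hpos x Hx ltac:(lra)). lra.
    - simpl; lra. }
  simpl in H; lra.
Qed.

Lemma conv_up (F g : R -> R) (t0 lo c d : R) :
  lo < g t0 < c -> c < d ->
  (forall y, lo < y < c -> 0 < F y) ->
  (forall y, c < y < d -> F y < 0) ->
  (forall y, lo < y < c -> continuity_pt F y) ->
  (forall t, t0 <= t -> derivable_pt_lim g t (F (g t))) ->
  forall e, 0 < e -> exists M, forall t, M < t -> Rabs (g t - c) < e.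
Proof.
  intros H0 Hcd Fp Fn Fc Hd.
  assert (up : forall t, t0 <= t -> g t <= c).
  { intros t Ht. apply (barrier g (fun x => F (g x)) t0 t c d); try lra.
    - intros x Hx. apply Hd; lra.
    - intros x Hx Hg. apply Fn. lra. }
  assert (mono0 : forall t, t0 <= t -> g t0 <= g t).
  { intros t Ht. apply (barrier2 g (fun x => F (g x)) t0 t (g t0) lo); try lra.
    - intros x Hx. apply Hd; lra.
    - intros x Hx Hg. apply Fp. lra. }
  assert (mono : forall T t, t0 <= T -> T <= t -> g T <= g t).
  { intros T t HT Ht. pose proof (mono0 T HT). pose proof (up T HT).
    apply (barrier2 g (fun x => F (g x)) T t (g T) lo); try lra.
    - intros x Hx. apply Hd; lra.
    - intros x Hx Hg. apply Fp. lra. }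
  intros e He.
  destruct (classic (exists T, t0 <= T /\ c - e < g T)) as [[T [HT HgT]]|Hn].
  - exists T. intros t Ht. pose proof (mono T t HT ltac:(lra)). pose proof (up t ltac:(lra)).
    rewrite Rabs_left1; lra.
  - exfalso.
    assert (Hall : forall T, t0 <= T -> g T <= c - e).
    { intros T HT. destruct (Rle_dec (g T) (c - e)); auto. exfalso; apply Hn; exists T; split; auto; lra. }
    pose proof (Hall t0 ltac:(lra)).
    destruct (continuity_ab_min F (g t0) (c - e) H ltac:(intros; apply Fc; lra)) as [mx [Hmx Hmx2]].
    assert (Hm : 0 < F mx) by (apply Fp; lra).
    set (t := t0 + (c - g t0) / F mx + 1).
    assert (Htt : t0 < t). { unfold t. assert (0 < (c - g t0) / F mx) by (apply Rdiv_lt_0_compat; lra). lra. }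
    destruct (MVT_cor2 g (fun x => F (g x)) t0 t Htt ltac:(intros; apply Hd; lra)) as [xi [Hm2 Hxi]].
    assert (F mx <= F (g xi)). { apply Hmx. split. apply mono0; lra. apply Hall; lra. }
    assert (F mx * (t - t0) <= F (g xi) * (t - t0)) by (apply Rmult_le_compat_r; lra).
    assert (F mx * (t - t0) = c - g t0 + F mx) by (unfold t; field; lra).
    pose proof (Hall t ltac:(lra)). lra.
Qed.

Lemma cpe (f g : R -> R) x : (forall y, f y = g y) -> continuity_pt f x -> continuity_pt g x.
Proof. intros H. apply continuity_pt_locally_ext with 1; [lra|]. intros; auto. Qed.

Lemma drho_cont (A B : R -> R) x : continuity_pt A x -> continuity_pt B x ->
  1 < A x ^ 2 + B x ^ 2 -> continuity_pt (drho 1 A B) x.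
Proof.
  intros cA cB Hq.
  set (Q' := ((A * A + B * B) - fct_cte 1)%F).
  assert (cQ' : continuity_pt Q' x).
  { unfold Q'. apply continuity_pt_minus. apply continuity_pt_plus; apply continuity_pt_mult; auto.
    apply continuity_pt_const. intros a b; reflexivity. }
  apply (cpe ((A * Q' + (fct_cte 1 * B) * comp sqrt Q') / (A * A + B * B))%F).
  - intro y. unfold drho, sfun, Q', comp, div_fct, plus_fct, mult_fct, minus_fct, fct_cte.
    f_equal; [f_equal|]; try ring. f_equal. f_equal. ring.
  - apply continuity_pt_div.
    + apply continuity_pt_plus. apply continuity_pt_mult; auto.
      apply continuity_pt_mult. apply continuity_pt_mult; auto. apply continuity_pt_const. intros a b; reflexivity.
      apply continuity_pt_comp; auto. apply continuity_pt_sqrt.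
      unfold Q', minus_fct, plus_fct, mult_fct, fct_cte. nra.
    + apply continuity_pt_plus; apply continuity_pt_mult; auto.
    + unfold plus_fct, mult_fct. nra.
Qed.

Lemma drho_sign (A B : R -> R) x : 1 < A x ^ 2 + B x ^ 2 -> 0 < B x -> A x < 0 ->
  (-1 < A x -> 0 < drho 1 A B x) /\ (A x < -1 -> drho 1 A B x < 0).
Proof.
  intros Hq HB HA. unfold drho, sfun.
  set (a := A x) in *. set (b := B x) in *.
  assert (Hs : 0 < sqrt (a^2+b^2-1)) by (apply sqrt_lt_R0; lra).
  assert (Hs2 : sqrt (a^2+b^2-1) * sqrt (a^2+b^2-1) = a^2+b^2-1) by (apply sqrt_sqrt; lra).
  set (s := sqrt (a^2+b^2-1)) in *.
  assert (Hnum : a * (a^2+b^2-1) + 1 * b * s = s * (a * s + b)) by (rewrite <- Hs2; ring).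
  assert (Hprod : (a * s + b) * (b - a * s) = (1 - a^2) * (a^2+b^2)).
  { transitivity (b^2 - a^2 * (s*s)); [ring| rewrite Hs2; ring]. }
  assert (Hpos : 0 < b - a * s) by nra.
  rewrite Hnum. split; intro h.
  - apply Rdiv_lt_0_compat; [|lra]. apply Rmult_lt_0_compat; auto.
    assert (0 < (1 - a^2) * (a^2+b^2)) by (apply Rmult_lt_0_compat; nra).
    destruct (Rlt_le_dec 0 (a*s+b)) as [|h2]; auto. nra.
  - unfold Rdiv. apply Rmult_neg_pos; [|apply Rinv_0_lt_compat; lra].
    assert ((1 - a^2) * (a^2+b^2) < 0) by (apply Rmult_neg_pos; nra).
    assert (a*s+b < 0) by (destruct (Rlt_le_dec (a*s+b) 0) as [|h2]; auto; nra).
    nra.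
Qed.
Lemma cont_neg (g : R -> R) (x : R) : continuity_pt g (-x) ->
  continuity_pt (fun y => g (- y)) x.
Proof.
  intro H. apply (continuity_pt_comp Ropp g x); auto.
  apply continuity_pt_opp. apply (derivable_continuous_pt id), derivable_pt_id.
Qed.

Lemma deriv_neg (g : R -> R) s l : derivable_pt_lim g (-s) l ->
  derivable_pt_lim (fun y => g (- y)) s (- l).
Proof.
  intro H. replace (-l) with (l * -1) by ring.
  apply (derivable_pt_lim_comp Ropp g s (-1) l); auto.
  apply (derivable_pt_lim_opp id). apply derivable_pt_lim_id.
Qed.

Lemma deriv_lin (p k t : R) : derivable_pt_lim (fun t => p + k * t) t k.
Proof.
  intros e He. exists (mkposreal 1 Rlt_0_1). intros h Hh _.
  replace ((p + k * (t + h) - (p + k * t)) / h - k) with 0 by (field; auto).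
  rewrite Rabs_R0; auto.
Qed.

Theorem mainTheorem8 (A B : R -> R) (rm rp r1 r2 : R)
  (hA : smooth_on (fun r => 0 < r) A)
  (hB : smooth_on (fun r => 0 < r) B)
  (hrm : 0 < rm) (hr1 : rm < r1) (hr12 : r1 < r2) (hr2 : r2 < rp)
  (hneg : forall r, rm <= r <= rp -> A r < 0)
  (hpos : forall r, rm <= r <= rp -> 0 < B r)
  (hbm : A rm ^ 2 + B rm ^ 2 = 1)
  (hbp : A rp ^ 2 + B rp ^ 2 = 1)
  (herg : forall r, rm < r < rp -> 1 < A r ^ 2 + B r ^ 2)
  (hAm1 : forall r, rm < r < rp -> (A r = -1 <-> r = r1 \/ r = r2))
  (hAlt : forall r, r1 < r < r2 -> A r < -1) :
  (forall ri, (ri = r1 \/ ri = r2) ->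
     dphi 1 A B ri = B ri / ri /\ 0 < B ri / ri /\
     forall phi0, traj 1 A B rm rp (fun _ => True)
                    (fun _ => ri) (fun t => phi0 + (B ri / ri) * t)) /\
  (forall r, (rm < r < r1 \/ r2 < r < rp) -> 0 < drho 1 A B r) /\
  (forall r, r1 < r < r2 -> drho 1 A B r < 0) /\
  (forall a rho phi, traj 1 A B rm rp (fun t => a < t) rho phi ->
     forall t0, a < t0 -> rm < rho t0 < r1 -> lim_pinf rho r1) /\
  (forall rho phi, traj 1 A B rm rp (fun _ => True) rho phi ->
     forall t0, r1 < rho t0 < r2 -> lim_pinf rho r1 /\ lim_minf rho r2) /\
  (forall b rho phi, traj 1 A B rm rp (fun t => t < b) rho phi ->
     forall t0, t0 < b -> r2 < rho t0 < rp -> lim_minf rho r2).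
Proof.
  pose proof (hA O) as cA. pose proof (hB O) as cB. simpl in cA, cB.
  assert (Am : -1 < A rm) by (pose proof (hneg rm ltac:(lra)); pose proof (hpos rm ltac:(lra)); nra).
  assert (Ap : -1 < A rp) by (pose proof (hneg rp ltac:(lra)); pose proof (hpos rp ltac:(lra)); nra).
  assert (cAf : forall x, rm <= x <= rp -> continuity_pt (fun y => A y + 1) x).
  { intros x Hx. apply (cpe (A + fct_cte 1)%F). intro; reflexivity.
    apply continuity_pt_plus. apply cA; lra. apply continuity_pt_const. intros u v; reflexivity. }
  assert (Aleft : forall r, rm < r < r1 -> -1 < A r).
  { intros r Hr. destruct (Rlt_le_dec (-1) (A r)) as [|h]; auto. exfalso.
    destruct (Req_dec (A r) (-1)) as [e|ne].
    - apply hAm1 in e; lra.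
    - destruct (Ranalysis5.IVT_interv (fun y => - (A y + 1)) rm r) as [z [Hz Hz2]].
      + intros x Hx. apply continuity_pt_opp. apply cAf; lra.
      + lra.
      + lra.
      + lra.
      + assert (z <> rm) by (intro; subst; lra).
        assert (A z = -1) by lra. apply hAm1 in H0; lra. }
  assert (Aright : forall r, r2 < r < rp -> -1 < A r).
  { intros r Hr. destruct (Rlt_le_dec (-1) (A r)) as [|h]; auto. exfalso.
    destruct (Req_dec (A r) (-1)) as [e|ne].
    - apply hAm1 in e; lra.
    - destruct (Ranalysis5.IVT_interv (fun y => A y + 1) r rp) as [z [Hz Hz2]].
      + intros x Hx. apply cAf; lra.
      + lra.
      + lra.
      + lra.
      + assert (z <> rp) by (intro; subst; lra).
        assert (A z = -1) by lra. apply hAm1 in H0; lra. }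
  assert (sg : forall x, rm < x < rp -> (-1 < A x -> 0 < drho 1 A B x) /\ (A x < -1 -> drho 1 A B x < 0)).
  { intros x Hx. apply drho_sign. apply herg; lra. apply hpos; lra. apply hneg; lra. }
  assert (cd : forall x, rm < x < rp -> continuity_pt (drho 1 A B) x).
  { intros x Hx. apply drho_cont. apply cA; lra. apply cB; lra. apply herg; lra. }
  assert (Fp : forall r, (rm < r < r1 \/ r2 < r < rp) -> 0 < drho 1 A B r).
  { intros r [Hr|Hr]; apply sg; try lra. apply Aleft; lra. apply Aright; lra. }
  assert (Fn : forall r, r1 < r < r2 -> drho 1 A B r < 0).
  { intros r Hr. apply sg; try lra. apply hAlt; lra. }
  split; [|split; [exact Fp|split; [exact Fn|split; [|split]]]].
  - intros ri Hri.
    assert (Hin : rm < ri < rp) by lra.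
    assert (HA : A ri = -1) by (apply hAm1; auto).
    assert (HB : 0 < B ri) by (apply hpos; lra).
    assert (Hs : sfun A B ri = B ri).
    { unfold sfun. rewrite HA. replace ((-1)^2 + B ri ^2 - 1) with (Rsqr (B ri)) by (unfold Rsqr; ring).
      apply sqrt_Rsqr; lra. }
    assert (Hd : drho 1 A B ri = 0).
    { unfold drho. rewrite Hs, HA. replace (-1 * ((-1) ^ 2 + B ri ^ 2 - 1) + 1 * B ri * B ri) with 0 by ring.
      unfold Rdiv; ring. }
    assert (Hp : dphi 1 A B ri = B ri / ri).
    { unfold dphi. rewrite Hs, HA. field. split; [lra|]. nra. }
    split; [exact Hp|split].
    + apply Rdiv_lt_0_compat; lra.
    + intros phi0 t _. split; [exact Hin|split].
      * rewrite Hd. apply derivable_pt_lim_const.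
      * rewrite Hp. apply deriv_lin.
  - intros a rho phi Ht t0 Ha H0 e He.
    apply (conv_up (drho 1 A B) rho t0 rm r1 r2); try exact He; try lra.
    + intros y Hy; apply Fp; lra.
    + exact Fn.
    + intros y Hy; apply cd; lra.
    + intros t Ht0. apply (Ht t ltac:(lra)).
  - intros rho phi Ht t0 H0. split.
    + intros e He.
      destruct (conv_up (fun y => - drho 1 A B (- y)) (fun t => - rho t) t0 (-r2) (-r1) (-rm))
        with (e := e) as [M HM]; try exact He; try lra.
      * intros y Hy. assert (drho 1 A B (-y) < 0) by (apply Fn; lra). lra.
      * intros y Hy. assert (0 < drho 1 A B (-y)) by (apply Fp; lra). lra.
      * intros y Hy. apply cont_refl. apply cd; lra.
      * intros t _. rewrite Ropp_involutive. apply (derivable_pt_lim_opp rho). apply (Ht t I).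
      * exists M. intros t Hm. specialize (HM t Hm).
        replace (rho t - r1) with (- (- rho t - - r1)) by ring. rewrite Rabs_Ropp; auto.
    + intros e He.
      destruct (conv_up (fun y => - drho 1 A B y) (fun s => rho (- s)) (- t0) r1 r2 rp)
        with (e := e) as [M HM]; try exact He; try lra.
      * rewrite Ropp_involutive; lra.
      * intros y Hy. assert (drho 1 A B y < 0) by (apply Fn; lra). lra.
      * intros y Hy. assert (0 < drho 1 A B y) by (apply Fp; lra). lra.
      * intros y Hy. apply continuity_pt_opp. apply cd; lra.
      * intros t _. apply deriv_neg. apply (Ht (-t) I).
      * exists (- M). intros t Hm. specialize (HM (- t) ltac:(lra)). rewrite Ropp_involutive in HM; auto.
  - intros b rho phi Ht t0 Hb H0 e He.
    destruct (conv_up (fun y => drho 1 A B (- y)) (fun s => - rho (- s)) (- t0) (-rp) (-r2) (-r1))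
      with (e := e) as [M HM]; try exact He; try lra.
    + rewrite Ropp_involutive; lra.
    + intros y Hy. apply Fp; lra.
    + intros y Hy. apply Fn; lra.
    + intros y Hy. apply cont_neg. apply cd; lra.
    + intros t Ht0. rewrite Ropp_involutive.
      replace (drho 1 A B (rho (- t))) with (- - drho 1 A B (rho (- t))) by ring.
      apply (derivable_pt_lim_opp (fun s => rho (- s))). apply deriv_neg. apply (Ht (-t) ltac:(lra)).
    + exists (- M). intros t Hm. specialize (HM (- t) ltac:(lra)). rewrite Ropp_involutive in HM.
      replace (rho t - r2) with (- (- rho t - - r2)) by ring. rewrite Rabs_Ropp; auto.
Qed.
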